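(* For every map $M$, the set of imbalances in $M$ is a class of homologous $(\bmod 2)$ cycles in the dual of $M$; that is, there is a cycle $c$ of $G_D$ such that the set of imbalances of $M$ (viewed as subsets of $SQ(M)=E(G_D)$) equals $\{c\triangle b: b\in V\}$, where $V$ is the coboundary space of $G_M$.
   Context: A map is a triple $M=(C_M,v_M,f_M)$ where $C_M$ is a finite cubic graph (multiple edges allowed) and $v_M,f_M$ are disjoint perfect matchings whose union is a disjoint union of 4-cycles, the squares ($SQ(M)$); $a_M$ is the third perfect matching. The vertices of $C_M$ are corners; $v_M(x)$, $a_M(x)$ denote the corner joined to $x$ by the corresponding edge. $G_M$ has vertices the cycles of $v_M\cup a_M$ and edges the squares (each joining the cycles containing its two $v_M$-edges); $G_D$ (graph of the dual $D=(C_M,f_M,v_M)$) has vertices the cycles of $f_M\cup a_M$ and edges the squares (each joining the cycles containing its two $f_M$-edges). A cycle is an edge set with all degrees even. Two cycles of $G_D$ are homologous if their symmetric difference is a boundary in the dual t-map, i.e. (with edge sets identified with $SQ(M)$) an element of the $GF(2)$-coboundary space $V$ of $G_M$. A balancing partition of $M$ is a partition $\{A,B\}$ of the corners such that $x$ and $v_M(x)$ are in different classes and $x$ and $a_M(v_M(x))$ are in the same class, for every corner $x$. A square is balanced if its opposite corners lie in the same class, unbalanced otherwise; an imbalance of $M$ is the set of unbalanced squares of some balancing partition. *)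

(* Defs.v *)
From mathcomp Require Import all_boot.
Set Implicit Arguments. Unset Strict Implicit. Unset Printing Implicit Defensive.

(* A map on the finite set of corners T is given by three fixed-point-free
   involutions v, f, a : T -> T (the perfect matchings v_M, f_M, a_M of the
   cubic multigraph C_M: x is joined to v x, f x, a x).  *)
Section MapDefs.
Variables (T : finType) (v f a : T -> T).

Definition fpf_involution (g : T -> T) : Prop :=
  (forall x, g (g x) = x) /\ (forall x, g x != x).

(* v and f are disjoint perfect matchings whose union is a disjoint union of
   4-cycles  x - v x - f (v x) - v (f (v x)) - x  (f closes the cycle). *)
Definition is_map : Prop :=
  [/\ fpf_involution v, fpf_involution f, fpf_involution a,
      (forall x, v x != f x) & (forall x, v (f (v (f x))) = x)].

Definition sq (x : T) : {set T} := [set x; v x; f x; v (f x)].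
Definition SQ : {set {set T}} := [set sq x | x in T].

(* cycles of v ∪ a (vertices of G_M) and of f ∪ a (vertices of G_D) *)
Definition varel : rel T := [rel x y | (y == v x) || (y == a x)].
Definition farel : rel T := [rel x y | (y == f x) || (y == a x)].
Definition vaorb (x : T) : {set T} := [set y | connect varel x y].
Definition faorb (x : T) : {set T} := [set y | connect farel x y].
Definition VGM : {set {set T}} := [set vaorb x | x in T].
Definition VGD : {set {set T}} := [set faorb x | x in T].

(* f-edges of a square; in G_D the square s has one end at the cycle of
   f ∪ a containing each of its two f-edges *)
Definition fedges (s : {set T}) : {set {set T}} := [set [set x; f x] | x in s].

(* degree in G_D of the vertex u in the edge set c (loops count twice) *)
Definition degD (c : {set {set T}}) (u : {set T}) : nat :=
  \sum_(s in c) #|[set e in fedges s | e \subset u]|.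

Definition cycleD (c : {set {set T}}) : Prop :=
  c \subset SQ /\ (forall u, u \in VGD -> ~~ odd (degD c u)).

(* coboundary in G_M of a vertex set W: squares with exactly one end in W;
   the square sq x has its v-edges {x, v x} and {f x, v (f x)}, with ends
   vaorb x and vaorb (f x). *)
Definition coboundM (W : {set {set T}}) : {set {set T}} :=
  [set sq x | x in T & (vaorb x \in W) != (vaorb (f x) \in W)].

Definition in_coboundary_space (b : {set {set T}}) : Prop :=
  exists W : {set {set T}}, W \subset VGM /\ b = coboundM W.

Definition balancing (A : {set T}) : Prop :=
  forall x, ((x \in A) != (v x \in A)) /\ ((x \in A) = (a (v x) \in A)).

Definition imbalance (A : {set T}) : {set {set T}} :=
  [set s in SQ | [exists x in s, (x \in A) != (f (v x) \in A)]].

Definition is_imbalance (S : {set {set T}}) : Prop :=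
  exists A : {set T}, balancing A /\ S = imbalance A.

End MapDefs.

Definition symdiff (T : finType) (A B : {set T}) : {set T} :=
  (A :\: B) :|: (B :\: A).

(* Main.v *)
Require Import Defs.
From mathcomp Require Import all_boot zify.
Set Implicit Arguments. Unset Strict Implicit. Unset Printing Implicit Defensive.

Section Aux.
Variables (T : finType) (v f a : T -> T).
Hypothesis hM : is_map v f a.

Lemma vK x : v (v x) = x. Proof. by case: hM => [[]]. Qed.
Lemma fK x : f (f x) = x. Proof. by case: hM => _ []. Qed.
Lemma aK x : a (a x) = x. Proof. by case: hM => _ _ []. Qed.
Lemma vN x : v x != x. Proof. by case: hM => [[]]. Qed.
Lemma fN x : f x != x. Proof. by case: hM => _ []. Qed.
Lemma aN x : a x != x. Proof. by case: hM => _ _ []. Qed.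
Lemma vf x : v (f (v (f x))) = x. Proof. by case: hM. Qed.
Lemma fv_vf x : f (v x) = v (f x).
Proof. by rewrite -{1}[x]vf vK fK. Qed.
Lemma fvf x : f (v (f x)) = v x.
Proof. by rewrite -{2}[x]vf vK. Qed.

Lemma vinj : injective v. Proof. exact: can_inj vK. Qed.
Lemma finj : injective f. Proof. exact: can_inj fK. Qed.
Lemma ainj : injective a. Proof. exact: can_inj aK. Qed.

Definition p x := a (v x).
Lemma pinj : injective p. Proof. by move=> x y /ainj /vinj. Qed.
Lemma pvp x : p (v (p x)) = v x. Proof. by rewrite /p vK aK. Qed.
Lemma iter_pv k x : iter k p (v (iter k p x)) = v x.
Proof.
elim: k x => [//|k IH] x.
by rewrite iterSr [iter k.+1 p x]iterS pvp IH.
Qed.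
Lemma iter_inj k : injective (iter k p).
Proof. elim: k => [//|k IH] x y /= /pinj; exact: IH. Qed.

Lemma not_conn x : ~~ fconnect p x (v x).
Proof.
apply/negP => /iter_findex; move: (findex _ _ _) => k hk.
move: hk.
have [m [->|->]] : exists m, k = m.*2 \/ k = m.*2.+1.
  exists k./2; case: (odd k) (odd_double_half k) => h; [right|left]; rewrite -{1}h //.
- rewrite -addnn iterD => h.
  have := iter_pv m x; rewrite -h => /iter_inj e.
  by move: (vN (iter m p x)); rewrite e eqxx.
- rewrite -addnn -addnS iterD iterS => h.
  have := iter_pv m x; rewrite -h => /iter_inj e.
  by move: (aN (v (iter m p x))); rewrite /p in e; rewrite -e eqxx.
Qed.

Definition A0 : {set T} :=
  [set x | enum_rank (froot p x) < enum_rank (froot p (v x))]%N.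

Lemma A0_bal : balancing v a A0.
Proof.
have sym := fconnect_sym pinj.
have rootp x : froot p (p x) = froot p x.
  apply/eqP; rewrite root_connect //; rewrite sym; exact: fconnect1.
move=> x; rewrite !inE vK; split.
- have ne : enum_rank (froot p x) != enum_rank (froot p (v x)).
    apply/negP=> /eqP /enum_rank_inj /eqP; rewrite root_connect //.
    by apply/negP; exact: not_conn.
  by move: ne; rewrite -(inj_eq val_inj) /=; case: ltngtP.
- rewrite -/(p x) rootp; congr (_ < _)%N; congr (enum_rank _).
  by rewrite -{1}(pvp x) rootp.
Qed.

Lemma sq_self x : x \in sq v f x.
Proof. by rewrite /sq !inE eqxx. Qed.

Lemma inv_sq (P : T -> bool) : (forall x, P (v x) = P x) -> (forall x, P (f x) = P x) ->
  forall x y, y \in sq v f x -> P y = P x.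
Proof.
move=> Pv Pf x y; rewrite /sq !inE => /orP[/orP[/orP[]|]|] /eqP ->; by rewrite ?Pv ?Pf.
Qed.

Lemma sq_eq_inv (P : T -> bool) : (forall x, P (v x) = P x) -> (forall x, P (f x) = P x) ->
  forall x y, sq v f x = sq v f y -> P x = P y.
Proof. move=> Pv Pf x y e; apply: (inv_sq Pv Pf); rewrite -e; exact: sq_self. Qed.

Definition IA (A : {set T}) x := (x \in A) != (f (v x) \in A).

Lemma IA_v (A : {set T}) : (forall x, (v x \in A) = ~~ (x \in A)) -> forall x, IA A (v x) = IA A x.
Proof. by move=> hv x; rewrite /IA vK fv_vf !hv; case: (_ \in A); case: (_ \in A). Qed.
Lemma IA_f (A : {set T}) : (forall x, (v x \in A) = ~~ (x \in A)) -> forall x, IA A (f x) = IA A x.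
Proof. by move=> hv x; rewrite /IA fvf fv_vf !hv; case: (_ \in A); case: (_ \in A). Qed.

Lemma mem_imb (A : {set T}) : (forall x, (v x \in A) = ~~ (x \in A)) -> forall x,
  (sq v f x \in imbalance v f A) = IA A x.
Proof.
move=> hv x; rewrite /imbalance inE; have -> : sq v f x \in SQ v f by apply: imset_f.
apply/existsP/idP => [[y /andP [hy hI]]|hI].
  by rewrite -(inv_sq (IA_v hv) (IA_f hv) hy).
by exists x; rewrite sq_self.
Qed.

Definition cobD (D : T -> bool) := [set sq v f x | x in T & D x != D (f x)].

Lemma mem_cob (D : T -> bool) : (forall x, D (v x) = D x) -> forall x,
  (sq v f x \in cobD D) = (D x != D (f x)).
Proof.
move=> Dv x.
have Pv y : (D (v y) != D (f (v y))) = (D y != D (f y)) by rewrite fv_vf !Dv.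
have Pf y : (D (f y) != D (f (f y))) = (D y != D (f y)) by rewrite fK eq_sym.
apply/imsetP/idP => [[y]|h]; last by exists x; rewrite ?inE.
by rewrite inE => hy /(sq_eq_inv Pv Pf) ->.
Qed.

Lemma symdiffE (U : finType) (X Y : {set U}) s : (s \in symdiff X Y) = ((s \in X) != (s \in Y)).
Proof. by rewrite /symdiff !inE; case: (s \in X); case: (s \in Y). Qed.

Lemma shift (A : {set T}) D : (forall x, (v x \in A) = ~~ (x \in A)) ->
  (forall x, D (v x) = D x) ->
  imbalance v f [set x | (x \in A) != D x] = symdiff (imbalance v f A) (cobD D).
Proof.
move=> hv Dv; set B := [set x | _].
have hvB x : (v x \in B) = ~~ (x \in B) by rewrite !inE hv Dv; case: (_ \in A); case: (D x).
apply/setP => s; rewrite symdiffE.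
case: (boolP (s \in SQ v f)) => [/imsetP [x _ ->]|ns].
  rewrite !mem_imb // mem_cob // /IA !inE fv_vf Dv.
  by case: (x \in A); case: (v (f x) \in A); case: (D x); case: (D (f x)).
have -> : s \in imbalance v f B = false by rewrite inE (negbTE ns).
have -> : s \in imbalance v f A = false by rewrite inE (negbTE ns).
suff -> : (s \in cobD D) = false by [].
apply/negP => /imsetP [x _ e]; by move: ns; rewrite e imset_f.
Qed.

Definition E y : {set T} := [set y; f y].
Lemma E_f y : E (f y) = E y. Proof. by rewrite /E fK setUC. Qed.
Lemma mem_E y z : (z \in E y) = (z == y) || (z == f y). Proof. by rewrite !inE. Qed.
Lemma E_eq y z : E y = E z -> (z == y) || (z == f y).
Proof. move=> e; rewrite -mem_E e mem_E eqxx //. Qed.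

Lemma pair_card n : forall X : {set T}, #|X| <= n -> (forall y, y \in X -> f y \in X) ->
  #|X| = 2 * #|E @: X|.
Proof.
elim: n => [|n IH] X hX hf.
  by move: hX; rewrite leqn0 cards_eq0 => /eqP e; rewrite e imset0 !cards0.
case: (set_0Vmem X) => [e|[y hy]]; first by rewrite e imset0 !cards0.
set X' := X :\: E y.
have sub : E y \subset X.
  by apply/subsetP => z; rewrite mem_E => /orP[]/eqP->; rewrite ?hf.
have cX : #|X| = #|X'| + 2.
  rewrite -(cardsID (E y) X) addnC; congr (_ + _).
  by rewrite (setIidPr sub) /E cards2 eq_sym fN.
have hf' : forall z, z \in X' -> f z \in X'.
  move=> z; rewrite !inE => /andP [nz hz]; rewrite hf // andbT.
  by apply: contra nz => /orP[]/eqP e; rewrite -[z]fK e ?fK eqxx ?orbT.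
have nE : E y \notin E @: X'.
  apply/imsetP => [[z hz e]]; move: hz; rewrite inE.
  by move/E_eq: (e) => /orP[]/eqP->; rewrite mem_E eqxx ?orbT.
have iX : E @: X = E y |: E @: X'.
  apply/setP => e; rewrite inE; apply/imsetP/orP.
    move=> [z hz ->]; case: (boolP (z \in E y)) => hzy.
      by left; rewrite inE; move: hzy; rewrite mem_E => /orP[]/eqP->; rewrite ?E_f eqxx.
    by right; apply: imset_f; rewrite inE hzy.
  case=> [/set1P ->|/imsetP [z]]; first by exists y.
  by rewrite inE => /andP [_ hz] ->; exists z.
rewrite iX cardsU1 nE cX (IH X') //=; first by rewrite add1n mulnS addnC.
by move: hX; rewrite cX addn2 ltnS => /ltnW.
Qed.

Lemma sq_fclosed x y : y \in sq v f x -> f y \in sq v f x.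
Proof.
rewrite /sq !inE => /orP[/orP[/orP[]|]|] /eqP ->;
by rewrite ?fK ?fvf ?fv_vf ?fK ?eqxx ?orbT.
Qed.

Lemma sq_v x : sq v f (v x) = sq v f x.
Proof.
apply/setP => z; rewrite /sq !inE fv_vf !vK.
by case: (z == x); case: (z == v x); case: (z == f x); case: (z == v (f x)).
Qed.
Lemma sq_f x : sq v f (f x) = sq v f x.
Proof.
apply/setP => z; rewrite /sq !inE fK.
by case: (z == x); case: (z == v x); case: (z == f x); case: (z == v (f x)).
Qed.

Lemma sq_uniq s y : s \in SQ v f -> y \in s -> s = sq v f y.
Proof.
case/imsetP => x _ -> hy.
have P := @inv_sq (fun z => sq v f z == sq v f x).
by apply/esym/eqP; rewrite (P _ _ x y hy) //= => z; rewrite ?sq_v ?sq_f.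
Qed.

Lemma term (u : {set T}) s : (forall y, y \in u -> f y \in u) -> s \in SQ v f ->
  2 * #|[set e in fedges f s | e \subset u]| = #|s :&: u|.
Proof.
move=> hu /imsetP [x _ ->].
have -> : [set e in fedges f (sq v f x) | e \subset u] = E @: (sq v f x :&: u).
  apply/setP => e; rewrite inE; apply/andP/imsetP.
    case=> /imsetP [y hy ->] hs; exists y => //; rewrite inE hy.
    by move/subsetP: hs; apply; rewrite !inE eqxx.
  case=> y; rewrite inE => /andP [hy hyu] ->; split; first exact: imset_f.
  by apply/subsetP => z; rewrite mem_E => /orP[]/eqP->; rewrite ?hu.
rewrite -(@pair_card #|sq v f x :&: u|) //.
by move=> y; rewrite in_setI => /andP [h1 h2]; rewrite in_setI sq_fclosed ?hu.
Qed.

Lemma sum_card (U : finType) (u : {set U}) (P : pred U) :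
  \sum_(y in u) (P y : nat) = #|[set y in u | P y]|.
Proof.
rewrite -sum1_card big_mkcond [RHS]big_mkcond; apply: eq_bigr => y _.
by rewrite inE; case: (y \in u); case: (P y).
Qed.

Lemma degD2 (u : {set T}) (c : {set {set T}}) : (forall y, y \in u -> f y \in u) ->
  c \subset SQ v f ->
  2 * degD f c u = #|[set y in u | sq v f y \in c]|.
Proof.
move=> hu hc; rewrite /degD big_distrr /=.
rewrite (eq_bigr (fun s : {set T} => \sum_(y in u) (y \in s : nat))); last first.
  move=> s hs; rewrite term //; last by move/subsetP: hc; apply.
  by rewrite sum_card; apply: eq_card => y; rewrite !inE andbC.
rewrite exchange_big /= -sum_card; apply: eq_bigr => y hy.
rewrite sum_card; case: (boolP (sq v f y \in c)) => hyc.
  rewrite (_ : [set s in c | y \in s] = [set sq v f y]) ?cards1 //; apply/setP => s; rewrite !inE.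
  apply/andP/eqP => [[hs ys]|->]; last by rewrite hyc sq_self.
  by apply: sq_uniq => //; move/subsetP: hc; apply.
rewrite (_ : [set s in c | y \in s] = set0) ?cards0 //; apply/setP => s; rewrite !inE.
apply/andP => [[hs ys]]; move: hyc; rewrite -(sq_uniq _ ys) ?hs //.
by move/subsetP: hc; apply.
Qed.

Lemma bal_v (A : {set T}) : balancing v a A -> forall x, (v x \in A) = ~~ (x \in A).
Proof. by move=> hA x; case: (hA x) => h _; move: h; case: (x \in A); case: (v x \in A). Qed.
Lemma bal_a (A : {set T}) : balancing v a A -> forall x, (a x \in A) = ~~ (x \in A).
Proof. by move=> hA x; case: (hA (v x)) => _; rewrite vK => <-; rewrite bal_v. Qed.

Lemma imb_cycle (A : {set T}) : balancing v a A -> cycleD v f a (imbalance v f A).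
Proof.
move=> hA; have hv := bal_v hA; have ha := bal_a hA.
have hc : imbalance v f A \subset SQ v f by apply/subsetP => s; rewrite inE => /andP [].
split => // u /imsetP [x0 _ ->]; set u0 := faorb f a x0.
have hu y : y \in u0 -> f y \in u0.
  by rewrite !inE => h; apply: connect_trans h (connect1 _); rewrite /farel /= eqxx.
have hua y : y \in u0 -> a y \in u0.
  by rewrite !inE => h; apply: connect_trans h (connect1 _); rewrite /farel /= eqxx orbT.
clearbody u0.
have h2 := degD2 hu hc.
set N := [set y in u0 | _] in h2.
have memN y : (y \in N) = (y \in u0) && ((y \in A) == (f y \in A)).
  rewrite inE mem_imb // /IA fv_vf hv.
  by case: (y \in u0); case: (y \in A); case: (f y \in A).
set P := u0 :&: A; set Q := u0 :\: A; set F := [set y | f y \in A].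
have cPQ : #|P| = #|Q|.
  rewrite -(card_imset _ ainj); apply: eq_card => z; rewrite !inE.
  apply/imsetP/andP => [[w]|[nz zu]].
    by rewrite !inE => /andP [wu wA] ->; rewrite ha wA hua.
  by exists (a z); rewrite ?aK // !inE ha nz hua.
have c1 := cardsID F P; have c2 := cardsID F Q.
have e1 : P :&: F = N :&: A.
  apply/setP => z; rewrite ?in_setI ?in_setD memN !inE.
  by case: (z \in u0); case: (z \in A); case: (f z \in A).
have e2 : Q :\: F = N :\: A.
  apply/setP => z; rewrite ?in_setI ?in_setD memN !inE.
  by case: (z \in u0); case: (z \in A); case: (f z \in A).
have e3 : #|P :\: F| = #|Q :&: F|.
  rewrite -(card_imset _ finj); apply: eq_card => z; rewrite !inE.
  apply/imsetP/idP => [[w]|].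
    by rewrite !inE => /andP [/negbTE wF /andP [wu wA]] ->; rewrite fK wA hu // wF.
  case/andP => /andP [nz zu] zF; exists (f z); rewrite ?fK //.
  by rewrite !inE fK (negbTE nz) hu // zF.
have cN := cardsID A N.
have [k hk] : exists k, #|N :&: A| = 2 * k.
  exists #|E @: (N :&: A)|; apply: (@pair_card #|N :&: A|) => // z.
  by rewrite in_setI memN => /andP [/andP [zu /eqP e] zA]; rewrite in_setI memN fK hu // -e zA eqxx.
rewrite e1 in c1; rewrite e2 in c2.
have hd : degD f (imbalance v f A) u0 = 2 * k by lia.
by rewrite hd oddM.
Qed.

Lemma varel_sym : symmetric (varel v a).
Proof.
move=> x y; rewrite /varel /=; congr orb; apply/eqP/eqP => ->; by rewrite ?vK ?aK.
Qed.

Lemma vaorb_e x y : varel v a x y -> vaorb v a x = vaorb v a y.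
Proof.
move=> h; apply/setP => z; rewrite !inE.
exact: (same_connect (sym_connect_sym varel_sym) (connect1 h)).
Qed.
Lemma vaorb_v x : vaorb v a (v x) = vaorb v a x.
Proof. by apply/esym/vaorb_e; rewrite /varel /= eqxx. Qed.
Lemma vaorb_a x : vaorb v a (a x) = vaorb v a x.
Proof. by apply/esym/vaorb_e; rewrite /varel /= eqxx orbT. Qed.

Lemma main_sec : exists c : {set {set T}},
    cycleD v f a c /\
    (forall S : {set {set T}},
        is_imbalance v f a S <->
        exists b : {set {set T}},
          in_coboundary_space v f a b /\ S = symdiff c b).
Proof.
have := A0_bal; move: (A0) => A1 hA0; have hv0 := bal_v hA0; have ha0 := bal_a hA0.
exists (imbalance v f A1); split; first exact: imb_cycle.
move=> S; split.
  case=> A [hA ->]; have hv := bal_v hA; have ha := bal_a hA.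
  pose D x := (x \in A) != (x \in A1).
  set W := [set vaorb v a x | x in T & D x].
  have cl : closed (varel v a) [set x | D x].
    move=> x y; rewrite /varel /= => /orP [] /eqP ->; rewrite !inE /D ?hv ?hv0 ?ha ?ha0;
    by case: (x \in A); case: (x \in A1).
  have memW x : (vaorb v a x \in W) = D x.
    apply/imsetP/idP => [[y]|hx]; last by exists x; rewrite ?inE.
    move=> hy e; have Dy : D y by move: hy; rewrite !inE.
    have : x \in vaorb v a y by rewrite -e inE connect0.
    rewrite inE => /(closed_connect cl); rewrite !inE => <-; exact: Dy.
  exists (coboundM v f a W); split.
    exists W; split => //; apply/subsetP => o /imsetP [x _ ->]; exact: imset_f.
  have eA : A = [set x | (x \in A1) != (vaorb v a x \in W)].
    apply/setP => x; rewrite inE memW /D.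
    by case: (x \in A); case: (x \in A1).
  rewrite eA shift // => x; by rewrite vaorb_v.
case=> b [[W [hW ->]] ->].
exists [set x | (x \in A1) != (vaorb v a x \in W)]; split; last first.
  by rewrite shift // => x; rewrite vaorb_v.
move=> x; rewrite !inE vaorb_a !vaorb_v; case: (hA0 x) => h1 <-; split => //.
by rewrite hv0; case: (x \in A1); case: (vaorb v a x \in W).
Qed.
End Aux.

Theorem theorem4p3 (T : finType) (v f a : T -> T) (hM : is_map v f a) :
  exists c : {set {set T}},
    cycleD v f a c /\
    (forall S : {set {set T}},
        is_imbalance v f a S <->
        exists b : {set {set T}},
          in_coboundary_space v f a b /\ S = symdiff c b).
Proof. exact: (@main_sec T v f a hM). Qed.
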